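(* Let $\mathcal D$ be a semicartesian symmetric monoidal category and $X$ an object. The following are equivalent: (1) $X$ admits broadcasting, i.e. there is a morphism $b_X\colon X\to X\otimes X$ with $(\mathrm{id}_X\otimes\mathrm{del}_X)\circ b_X=\mathrm{id}_X$ and $(\mathrm{del}_X\otimes\mathrm{id}_X)\circ b_X=\mathrm{id}_X$. (2) The discard morphism $\mathrm{del}_X\colon X\to I$ is non-creative.
   Context: A symmetric monoidal category $(\mathcal D,\otimes,I)$ is semicartesian if $I$ is terminal; $\mathrm{del}_X\colon X\to I$ denotes the unique morphism (unitors suppressed). A dilation of $p\colon A\to X$ is a morphism $\pi\colon A\to X\otimes E$ (for some object $E$) with $(\mathrm{id}_X\otimes\mathrm{del}_E)\circ\pi=p$. A morphism $p\colon A\to X$ is non-creative if every dilation $\pi\colon A\to X\otimes E$ of $p$ equals $(p\otimes\mathrm{id}_E)\circ\iota$ for some dilation $\iota\colon A\to A\otimes E$ of $\mathrm{id}_A$. *)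

(* Defs.v *)
Set Implicit Arguments.
Unset Strict Implicit.

Declare Scope cat_scope.
Local Open Scope cat_scope.

Record SymMonCat := {
  Ob :> Type;
  Hom : Ob -> Ob -> Type;
  idm : forall A, Hom A A;
  comp : forall A B C, Hom B C -> Hom A B -> Hom A C;
  comp_id_l : forall A B (f : Hom A B), comp (idm B) f = f;
  comp_id_r : forall A B (f : Hom A B), comp f (idm A) = f;
  comp_assoc : forall A B C D (h : Hom C D) (g : Hom B C) (f : Hom A B),
      comp h (comp g f) = comp (comp h g) f;

  tens : Ob -> Ob -> Ob;
  tensm : forall A B C D, Hom A B -> Hom C D -> Hom (tens A C) (tens B D);
  tensm_id : forall A B, tensm (idm A) (idm B) = idm (tens A B);
  tensm_comp : forall A B C A' B' C' (g : Hom B C) (f : Hom A B)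
      (g' : Hom B' C') (f' : Hom A' B'),
      tensm (comp g f) (comp g' f') = comp (tensm g g') (tensm f f');

  unit : Ob;

  assoc : forall A B C, Hom (tens (tens A B) C) (tens A (tens B C));
  assoc_inv : forall A B C, Hom (tens A (tens B C)) (tens (tens A B) C);
  assoc_iso1 : forall A B C, comp (assoc_inv A B C) (assoc A B C) = idm _;
  assoc_iso2 : forall A B C, comp (assoc A B C) (assoc_inv A B C) = idm _;
  assoc_nat : forall A A' B B' C C' (f : Hom A A') (g : Hom B B') (h : Hom C C'),
      comp (assoc A' B' C') (tensm (tensm f g) h)
      = comp (tensm f (tensm g h)) (assoc A B C);

  lunit : forall A, Hom (tens unit A) A;
  lunit_inv : forall A, Hom A (tens unit A);
  lunit_iso1 : forall A, comp (lunit_inv A) (lunit A) = idm _;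
  lunit_iso2 : forall A, comp (lunit A) (lunit_inv A) = idm _;
  lunit_nat : forall A B (f : Hom A B),
      comp (lunit B) (tensm (idm unit) f) = comp f (lunit A);

  runit : forall A, Hom (tens A unit) A;
  runit_inv : forall A, Hom A (tens A unit);
  runit_iso1 : forall A, comp (runit_inv A) (runit A) = idm _;
  runit_iso2 : forall A, comp (runit A) (runit_inv A) = idm _;
  runit_nat : forall A B (f : Hom A B),
      comp (runit B) (tensm f (idm unit)) = comp f (runit A);

  braid : forall A B, Hom (tens A B) (tens B A);
  braid_nat : forall A A' B B' (f : Hom A A') (g : Hom B B'),
      comp (braid A' B') (tensm f g) = comp (tensm g f) (braid A B);
  braid_invol : forall A B, comp (braid B A) (braid A B) = idm _;

  pentagon : forall A B C D,
      comp (assoc A B (tens C D)) (assoc (tens A B) C D)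
      = comp (tensm (idm A) (assoc B C D))
             (comp (assoc A (tens B C) D) (tensm (assoc A B C) (idm D)));
  triangle : forall A B,
      comp (tensm (idm A) (lunit B)) (assoc A unit B)
      = tensm (runit A) (idm B);
  hexagon : forall A B C,
      comp (assoc B C A) (comp (braid A (tens B C)) (assoc A B C))
      = comp (tensm (idm B) (braid A C))
             (comp (assoc B A C) (tensm (braid A B) (idm C)))
}.

Arguments idm {s} A.
Arguments comp {s A B C} g f.
Arguments tens {s} A B.
Arguments tensm {s A B C D} f g.
Arguments unit {s}.
Arguments lunit {s} A.
Arguments lunit_inv {s} A.
Arguments runit {s} A.
Arguments runit_inv {s} A.

Notation "g \o f" := (comp g f) (at level 40, left associativity) : cat_scope.
Notation "A (x) B" := (tens A B) (at level 35, right associativity) : cat_scope.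
Notation "f <x> g" := (tensm f g) (at level 35, right associativity) : cat_scope.

Record SemicartesianSMC := {
  smc :> SymMonCat;
  del : forall A : Ob smc, Hom A unit;
  del_unique : forall (A : Ob smc) (f : Hom A unit), f = del A
}.

Arguments del {s} A : rename.

Section Defs.
Variable D : SemicartesianSMC.

(** pi : A -> X (x) E is a dilation of p : A -> X
    (the suppressed right unitor X (x) I ~ X is made explicit). *)
Definition is_dilation (A X E : Ob D) (p : Hom A X) (pi : Hom A (X (x) E)) : Prop :=
  runit X \o ((idm X <x> del E) \o pi) = p.

Definition non_creative (A X : Ob D) (p : Hom A X) : Prop :=
  forall (E : Ob D) (pi : Hom A (X (x) E)),
    is_dilation p pi ->
    exists iota : Hom A (A (x) E),
      is_dilation (idm A) iota /\ pi = (p <x> idm E) \o iota.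

(** X admits broadcasting (unitors made explicit). *)
Definition admits_broadcasting (X : Ob D) : Prop :=
  exists b : Hom X (X (x) X),
    runit X \o ((idm X <x> del X) \o b) = idm X /\
    lunit X \o ((del X <x> idm X) \o b) = idm X.
End Defs.

(* Main.v *)
Require Import Defs.
Local Open Scope cat_scope.

Theorem proposition4p18 (D : SemicartesianSMC) (X : Ob D) :
  admits_broadcasting X <-> non_creative (del X).
Proof.
  split.
  - intros [b [H1 H2]] E pi _.
    exists (tensm (idm X) (comp (lunit E) pi) \o b).
    split.
    + unfold is_dilation.
      rewrite (comp_assoc (idm X <x> del E)), <- tensm_comp, comp_id_l.
      rewrite (del_unique (del E \o (lunit E \o pi))).
      exact H1.
    + assert (Hb : (del X <x> idm X) \o b = lunit_inv X).
      { transitivity (lunit_inv X \o (lunit X \o ((del X <x> idm X) \o b))).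
        - rewrite comp_assoc, lunit_iso1. symmetry. apply comp_id_l.
        - rewrite H2. apply comp_id_r. }
      rewrite comp_assoc, <- tensm_comp, comp_id_l, comp_id_r.
      assert (HT : del X <x> (lunit E \o pi) = (idm unit <x> (lunit E \o pi)) \o (del X <x> idm X)).
      { rewrite <- tensm_comp, comp_id_l, comp_id_r. reflexivity. }
      rewrite HT, <- comp_assoc, Hb.
      pose proof (lunit_nat (lunit E \o pi)) as HN.
      assert (HN' : (idm unit <x> (lunit E \o pi)) = lunit_inv E \o ((lunit E \o pi) \o lunit X)).
      { rewrite <- HN, comp_assoc, lunit_iso1. symmetry. apply comp_id_l. }
      rewrite HN'.
      rewrite <- !comp_assoc, lunit_iso2, comp_id_r, comp_assoc, lunit_iso1.
      symmetry; apply comp_id_l.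
  - intros H.
    destruct (H X (lunit_inv X)) as [iota [Hi1 Hi2]].
    + unfold is_dilation. rewrite (del_unique (runit unit \o _)). reflexivity.
    + exists iota. split.
      * exact Hi1.
      * rewrite <- Hi2. apply lunit_iso2.
Qed.
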